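(* Let $f:\mathbb{R}^d\to\mathbb{R}$ be twice differentiable and strictly pseudoconvex with global minimizer $x_*$, and suppose $f(x)=\psi(\|x-x_*\|)$ for a twice differentiable $\psi:[0,\infty)\to\mathbb{R}$. Let \[ g(x)\coloneqq f(x_* )+\int_0^1\frac{\langle\nabla f(x_*+t(x-x_* )),\,x-x_*\rangle}{t}\,dt . \] If $\psi''(r)+\frac{\psi'(r)}{r}\ge 0$ for $r\in[0,M]$, then $g$ is convex on $\mathcal N=\{x:\ \|x-x_*\|\le M\}$.
   Context: $f$ is strictly pseudoconvex if for all $x\neq y$, $f(y)\le f(x)\Rightarrow\langle\nabla f(x),y-x\rangle<0$. $\|\cdot\|$ is the Euclidean norm. *)

(* Defs.v *)
From HB Require Import structures.
From mathcomp Require Import all_boot all_order all_algebra.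
From mathcomp Require Import all_classical all_reals all_analysis.
Set Implicit Arguments. Unset Strict Implicit. Unset Printing Implicit Defensive.
Import Order.TTheory GRing.Theory Num.Theory.
Import numFieldNormedType.Exports.
Local Open Scope ring_scope.
Local Open Scope classical_set_scope.

Section Defs.
Variables (R : realType) (d : nat).

Definition dotp (u v : 'rV[R]_d) : R := \sum_(i < d) u 0 i * v 0 i.
Definition enorm (u : 'rV[R]_d) : R := Num.sqrt (dotp u u).

Definition basis_vec (i : 'I_d) : 'rV[R]_d := delta_mx 0 i.

Definition grad (f : 'rV[R]_d -> R) (x : 'rV[R]_d) : 'rV[R]_d :=
  \row_i ('D_(basis_vec i) f x).

Definition twice_differentiable (f : 'rV[R]_d -> R) : Prop :=
  (forall x, differentiable f x) /\
  (forall (i : 'I_d) x, differentiable (fun y => 'D_(basis_vec i) f y) x).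

Definition strictly_pseudoconvex (f : 'rV[R]_d -> R) : Prop :=
  forall x y : 'rV[R]_d, x != y -> f y <= f x -> dotp (grad f x) (y - x) < 0.

Definition gfun (f : 'rV[R]_d -> R) (xs : 'rV[R]_d) (x : 'rV[R]_d) : R :=
  f xs + \int[lebesgue_measure]_(t in `[0, 1]%classic)
            (dotp (grad f (xs + t *: (x - xs))) (x - xs) / t).

Definition convex_on (S : set 'rV[R]_d) (h : 'rV[R]_d -> R) : Prop :=
  forall x y : 'rV[R]_d, S x -> S y -> forall l : R, 0 <= l <= 1 ->
    h (l *: x + (1 - l) *: y) <= l * h x + (1 - l) * h y.
End Defs.

(* Main.v *)
Require Import Defs.
From HB Require Import structures.
From mathcomp Require Import all_boot all_order all_algebra.
From mathcomp Require Import all_classical all_reals all_analysis.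
From mathcomp Require Import ring lra.

Import Order.TTheory GRing.Theory Num.Theory.
Import numFieldNormedType.Exports.
Local Open Scope ring_scope.
Local Open Scope classical_set_scope.

Section Alg.
Variables (R : realType) (d : nat).
Implicit Types (u v w : 'rV[R]_d).

Lemma dotpC u v : dotp u v = dotp v u.
Proof. by rewrite /dotp; apply: eq_bigr => i _; rewrite mulrC. Qed.

Lemma dotpDr u v w : dotp u (v + w) = dotp u v + dotp u w.
Proof. by rewrite /dotp -big_split; apply: eq_bigr => i _; rewrite mxE mulrDr. Qed.

Lemma dotpZr a u v : dotp u (a *: v) = a * dotp u v.
Proof. by rewrite /dotp mulr_sumr; apply: eq_bigr => i _; rewrite mxE mulrCA. Qed.

Lemma dotpNr u v : dotp u (- v) = - dotp u v.
Proof. by rewrite -scaleN1r dotpZr mulN1r. Qed.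

Lemma dotp_ge0 u : 0 <= dotp u u.
Proof. by apply: sumr_ge0 => i _; rewrite -expr2 sqr_ge0. Qed.

Lemma dotp_basis u i : dotp u (@basis_vec R d i) = u 0 i.
Proof.
rewrite /dotp (bigD1 i) //= big1 ?addr0.
  by rewrite /basis_vec mxE !eqxx mulr1.
by move=> j ji; rewrite /basis_vec mxE (negbTE ji) andbF mulr0.
Qed.

Lemma enorm_ge0 u : 0 <= enorm u.
Proof. exact: sqrtr_ge0. Qed.

Lemma enormZ a u : enorm (a *: u) = `|a| * enorm u.
Proof.
rewrite /enorm dotpZr dotpC dotpZr mulrA -expr2 sqrtrM ?sqr_ge0 //.
by rewrite sqrtr_sqr.
Qed.

Lemma enorm_gt0 u : u != 0 -> 0 < enorm u.
Proof.
move=> u0; rewrite /enorm sqrtr_gt0 lt_neqAle dotp_ge0 andbT.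
apply/negP => /eqP/esym H; move/negP: u0; apply; apply/eqP.
apply/rowP => i; rewrite mxE.
have : u 0 i * u 0 i = 0.
  apply: (@psumr_eq0P R _ xpredT (fun i => u 0 i * u 0 i)) => //.
  by move=> j _; rewrite -expr2 sqr_ge0.
by move/eqP; rewrite mulf_eq0 orbb => /eqP.
Qed.

Lemma enorm_basis i : enorm (@basis_vec R d i) = 1.
Proof.
by rewrite /enorm dotp_basis /basis_vec mxE !eqxx sqrtr1.
Qed.

Lemma CS u w : dotp u w ^+ 2 <= dotp u u * dotp w w.
Proof.
have E : \sum_i \sum_j (u 0 i * w 0 j - u 0 j * w 0 i) ^+ 2 =
   (dotp u u * dotp w w - dotp u w ^+ 2) *+ 2.
  have E1 : dotp u u * dotp w w = \sum_i \sum_j (u 0 i * u 0 i) * (w 0 j * w 0 j).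
    rewrite /dotp big_distrl /=; apply: eq_bigr => i _.
    by rewrite big_distrr.
  have E2 : dotp w w * dotp u u = \sum_i \sum_j (u 0 j * u 0 j) * (w 0 i * w 0 i).
    rewrite /dotp big_distrl /=; apply: eq_bigr => i _.
    by rewrite big_distrr /=; apply: eq_bigr => j _; rewrite mulrC.
  have E3 : dotp u w ^+ 2 = \sum_i \sum_j (u 0 i * w 0 i) * (u 0 j * w 0 j).
    rewrite expr2 /dotp big_distrl /=; apply: eq_bigr => i _.
    by rewrite big_distrr.
  have -> : (dotp u u * dotp w w - dotp u w ^+ 2) *+ 2 =
     dotp u u * dotp w w + dotp w w * dotp u u - dotp u w ^+ 2 *+ 2.
    by rewrite mulrC; ring.
  rewrite E1 E2 E3 -sumrMnl -sumrN -!big_split /=.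
  apply: eq_bigr => i _; rewrite -sumrMnl -sumrN -!big_split /=.
  by apply: eq_bigr => j _; ring.
have : 0 <= (dotp u u * dotp w w - dotp u w ^+ 2) *+ 2.
  rewrite -E; apply: sumr_ge0 => i _; apply: sumr_ge0 => j _; exact: sqr_ge0.
by rewrite pmulrn_lge0 // subr_ge0.
Qed.

Lemma enormD u w : enorm (u + w) <= enorm u + enorm w.
Proof.
rewrite /enorm.
have -> : dotp (u + w) (u + w) = dotp u u + dotp w w + 2 * dotp u w.
  rewrite dotpDr !(dotpC (u + w)) !dotpDr (dotpC w u); ring.
rewrite -[X in _ <= X]ger0_norm ?addr_ge0 ?sqrtr_ge0 // -sqrtr_sqr.
rewrite ler_sqrt ?sqr_ge0 // sqrrD !sqr_sqrtr ?dotp_ge0 //.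
rewrite -sqrtrM ?dotp_ge0 //.
suff : dotp u w <= Num.sqrt (dotp u u * dotp w w) by move=> h; nra.
apply: (le_trans (ler_norm _)); rewrite -sqrtr_sqr ler_sqrt.
  exact: CS.
by rewrite mulr_ge0 ?dotp_ge0.
Qed.

End Alg.
Section Der.
Variables (R : realType) (d : nat).

Lemma D_line (f : 'rV[R]_d -> R) y v t :
  'D_v f (y + t *: v) = 'D_1 (fun s : R => f (y + s *: v)) t.
Proof.
rewrite /derive; suff -> : (fun h : R => h^-1 *: (f (h *: v + (y + t *: v)) - f (y + t *: v))) =
  (fun h : R => h^-1 *: (f (y + (h *: 1 + t) *: v) - f (y + t *: v))) by [].
by apply: funext => h /=; rewrite [h *: 1]mulr1 scalerDl addrCA.
Qed.

Lemma derivable_line (f : 'rV[R]_d -> R) y v t :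
  derivable f (y + t *: v) v <-> derivable (fun s : R => f (y + s *: v)) t 1.
Proof.
rewrite /derivable; suff -> : (fun h : R => h^-1 *: (f (h *: v + (y + t *: v)) - f (y + t *: v))) =
  (fun h : R => h^-1 *: (f (y + (h *: 1 + t) *: v) - f (y + t *: v))) by [].
by apply: funext => h /=; rewrite [h *: 1]mulr1 scalerDl addrCA.
Qed.

Lemma is_derive_mulc (r t : R) : is_derive t 1 (fun s : R => s * r) r.
Proof.
have -> : (fun s : R => s * r) = (@id R) * cst r by apply: funext.
have := is_deriveM (is_derive_id t (1:R)) (is_derive_cst r t 1).
by rewrite /= scaler0 add0r [r *: 1]mulr1.
Qed.

Lemma D_radial (f : 'rV[R]_d -> R) xs (psi : R -> R) v t :
  (forall x, f x = psi (enorm (x - xs))) -> 0 < enorm v -> 0 < t ->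
  derivable psi (t * enorm v) 1 ->
  'D_v f (xs + t *: v) = enorm v * derive1 psi (t * enorm v).
Proof.
move=> hf r0 t0 dpsi; rewrite D_line.
rewrite (@near_eq_derive _ _ _ _ (psi \o (fun s => s * enorm v))); last first.
  near=> s; rewrite /= hf addrC addKr enormZ ger0_norm //.
  by apply: ltW; near: s; exact: lt_nbhsr.
rewrite -derive1E (derive1_comp (@ex_derive _ _ _ _ _ _ _ (is_derive_mulc (enorm v) t)) dpsi).
  rewrite [X in _ * X]derive1E (@derive_val _ _ _ _ _ _ _ (is_derive_mulc (enorm v) t)).
  by rewrite mulrC.

Unshelve. all: by end_near. Qed.

End Der.

Lemma dotp_grad (R : realType) (d : nat) (f : 'rV[R]_d -> R) y v :
  differentiable f y -> dotp (grad f y) v = 'D_v f y.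
Proof.
move=> df; rewrite (deriveE _ df) {2}(row_sum_delta v) linear_sum /= /dotp.
apply: eq_bigr => i _; rewrite mxE (deriveE _ df) linearZ /= mulrC.
by [].
Qed.

Section Main.
Variables (R : realType) (n : nat) (f : 'rV[R]_n.+1 -> R) (xs : 'rV[R]_n.+1)
  (psi : R -> R) (M : R).
Hypothesis htd : twice_differentiable f.
Hypothesis hpc : strictly_pseudoconvex f.
Hypothesis hmin : forall x, f xs <= f x.
Hypothesis hpsi : forall r, 0 < r -> derivable psi r 1 /\ derivable (derive1 psi) r 1.
Hypothesis hf : forall x, f x = psi (enorm (x - xs)).
Hypothesis hM : forall r, 0 < r <= M -> 0 <= derive1 (derive1 psi) r + derive1 psi r / r.

Let e : 'rV[R]_n.+1 := basis_vec R ord0.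
Let Df := fun y => 'D_e f y.
Let q := fun s : R => Df (xs + s *: e).

Let fdiff x : differentiable f x. Proof. by case: htd. Qed.
Let Dfdiff x : differentiable Df x. Proof. by case: htd => _; apply. Qed.

Let q_derivable s : derivable q s 1.
Proof.
have [H _] := derivable_line _ _ Df xs e s.
exact: (H (diff_derivable (Dfdiff _))).
Qed.

Let q_cont s : {for s, continuous q}.
Proof. by apply: differentiable_continuous; apply/derivable1_diffP. Qed.

Let q0 : q 0 = 0.
Proof.
rewrite /q /Df D_line.
have := @derive1_at_min R (fun s => f (xs + s *: e)) (-1) 1 0.
move=> /(_ _ _ _ _) H; apply: (@derive_val _ _ _ _ _ _ _ (H _ _ _ _)).
- lra.
- move=> t _; have [H1 _] := derivable_line _ _ f xs e t.
  exact: (H1 (diff_derivable (fdiff _))).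
- rewrite in_itv /=; apply/andP; split; lra.
- by move=> t _; rewrite scale0r addr0.
Qed.

Let q_psi s : 0 < s -> q s = derive1 psi s.
Proof.
move=> s0; rewrite /q /Df (@D_radial _ _ f xs psi) //; last first.
- by rewrite /e enorm_basis mulr1; case: (hpsi _ s0).
- by rewrite /e enorm_basis.
by rewrite /e enorm_basis mul1r mulr1.
Qed.

Let c := 'D_1 q 0.
Let w := fun s : R => if s == 0 then c else q s / s.

Let w_cont s : {for s, continuous w}.
Proof.
have [->|s0] := eqVneq s 0.
  apply/continuous_withinNx.
  have := q_derivable 0; rewrite /derivable.
  have -> : w 0 = c by rewrite /w eqxx.
  apply: cvg_trans; apply: near_eq_cvg; near=> h.
  have h0 : h != 0 by near: h; exact: nbhs_dnbhs_neq.
  by rewrite /w (negbTE h0) /= q0 subr0 addr0 [h%:A]mulr1 mulrC.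
apply: differentiable_continuous; apply/derivable1_diffP.
apply: (@near_eq_derivable _ _ _ (q * (fun y => (id y)^-1)) w s 1); last first.
  exact: derivableM (q_derivable s) (derivableV s0 (@derivable_id _ _ s 1)).
near=> x; rewrite /w ifF //; apply/negbTE; near: x.
exact: (@cvgr_neq0 _ _ _ (nbhs s) _ id s cvg_id s0).
Unshelve. all: by end_near. Qed.

Let wc : continuous w. Proof. by move=> s; apply: w_cont. Qed.

Let W := fun x : R => \int[lebesgue_measure]_(t in `[-1, x]) w t.

Let W_der (x : R) : -1 < x -> is_derive x 1 W (w x).
Proof.
move=> x1.
have xx1 : x < x + 1 by lra.
have [h1 h2] := @continuous_FTC1_closed R w (-1) x (x + 1) xx1
  (continuous_compact_integrable (@segment_compact R _ _) (continuous_subspaceT wc)) x1 (w_cont x).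
apply: DeriveDef; first exact: h1.
by rewrite -derive1E.
Qed.

Let G := fun r : R => r * (W r - W 0).

Let G_der (r : R) : -1 < r -> is_derive r 1 G (W r - W 0 + r * w r).
Proof.
move=> r1.
have := is_deriveM (is_derive_id r (1:R)) (is_deriveB (W_der r r1) (is_derive_cst (W 0) r 1)).
have -> : (@id R) * (W - cst (W 0)) = G by apply: funext.
by rewrite subr0 /= [(W r - W 0) *: 1]mulr1 addrC.
Qed.

Let H := fun s : R => W s - W 0 + derive1 psi s.

Let DG_near (r : R) : 0 < r -> \forall s \near r, 'D_1 G s = H s.
Proof.
move=> r0; near=> s.
have s0 : 0 < s by near: s; exact: lt_nbhsr.
have s1 : -1 < s by lra.
rewrite (@derive_val _ _ _ _ _ _ _ (G_der s s1)).
by rewrite /H /w (gt_eqF s0) mulrC divfK ?gt_eqF // q_psi.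
Unshelve. all: by end_near. Qed.

Let H_der (r : R) : 0 < r -> is_derive r 1 H (w r + derive1 (derive1 psi) r).
Proof.
move=> r0.
have dp : is_derive r 1 (derive1 psi) (derive1 (derive1 psi) r).
  by apply: DeriveDef; [case: (hpsi _ r0)|rewrite derive1E].
have r1 : -1 < r by lra.
have := is_deriveD (is_deriveB (W_der r r1) (is_derive_cst (W 0) r 1)) dp.
by rewrite subr0.
Qed.

Let int_G (v : 'rV[R]_n.+1) :
  \int[lebesgue_measure]_(t in `[0, 1]) (dotp (grad f (xs + t *: v)) v / t)
  = G (enorm v).
Proof.
have [->|v0] := eqVneq v 0.
  have -> : enorm (0 : 'rV[R]_n.+1) = 0.
    by rewrite /enorm /dotp big1 ?sqrtr0 // => i _; rewrite mxE mul0r.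
  rewrite /G mul0r (@eq_Rintegral _ _ _ _ _ (fun _ => 0)).
    by rewrite Rintegral_cst ?mul0r //; exact: measurable_itv.
  by move=> t _; rewrite /dotp big1 ?mul0r // => i _; rewrite [X in _ * X]mxE mulr0.
have r0 : 0 < enorm v by apply: enorm_gt0.
set r := enorm v.
set h := fun t : R => r ^+ 2 * w (t * r).
have mc : continuous (fun t : R => t * r).
  move=> t; apply: differentiable_continuous; apply/derivable1_diffP.
  exact: (@ex_derive _ _ _ _ _ _ _ (is_derive_mulc _ r t)).
have hc : continuous h.
  move=> t; apply: (@continuousM _ _ (cst (r ^+ 2)) (w \o (fun t => t * r))).
    exact: cst_continuous.
  exact: continuous_comp (mc t) (wc _).
have Fh : {in `]0, 1], (fun t => dotp (grad f (xs + t *: v)) v / t) =1 h}.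
  move=> t; rewrite inE /= in_itv /= => /andP[t0 t1].
  have tr0 : 0 < t * r by rewrite mulr_gt0.
  rewrite dotp_grad // (@D_radial _ _ f xs psi) //; last by case: (hpsi _ tr0).
  rewrite /h /w (gt_eqF tr0) q_psi //.
  by rewrite -/r; field; rewrite ?(gt_eqF t0) ?(gt_eqF r0).
have ih : lebesgue_measure.-integrable `[0, 1] (EFin \o h).
  exact: (continuous_compact_integrable (@segment_compact R _ _) (continuous_subspaceT hc)).
have ih' : lebesgue_measure.-integrable `]0, 1] (EFin \o h).
  apply: (integrableS _ _ _ ih).
  - exact: measurable_itv.
  - exact: measurable_itv.
  - by apply: subset_itvr; rewrite bnd_simp.
have iF : lebesgue_measure.-integrable `]0, 1]
    (EFin \o (fun t => dotp (grad f (xs + t *: v)) v / t)).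
  move: ih'; apply: eq_integrable; first exact: measurable_itv.
  by move=> t ht /=; rewrite Fh.
rewrite -Rintegral_itv_obnd_cbnd //.
transitivity (\int[lebesgue_measure]_(x in `]0, 1]) h x).
  by apply: eq_Rintegral => t ht; rewrite Fh.
rewrite Rintegral_itv_obnd_cbnd //.
set Phi := fun t : R => r * W (t * r).
have PD (t : R) : 0 <= t -> is_derive t 1 Phi (r * (w (t * r) * r)).
  move=> t0; have tr1 : -1 < t * r by rewrite (lt_le_trans _ (mulr_ge0 t0 (ltW r0))) // ltrN10.
  have := is_deriveZ r (@is_derive1_comp R W (fun s => s * r) t (w (t * r)) r (W_der _ tr1) (is_derive_mulc _ r t)).
  by have -> : r \*: (W \o (fun t => t * r)) = Phi by apply: funext.
have Pc (t : R) : 0 <= t -> {for t, continuous Phi}.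
  move=> t0; apply: differentiable_continuous; apply/derivable1_diffP.
  exact: (@ex_derive _ _ _ _ _ _ _ (PD t t0)).
have dPhi : derivable_oo_LRcontinuous Phi 0 1.
  split.
  + move=> t; rewrite in_itv /= => /andP[t0 _].
    exact: (@ex_derive _ _ _ _ _ _ _ (PD t (ltW t0))).
  + by apply: cvg_at_right_filter; apply: Pc.
  + by apply: cvg_at_left_filter; apply: Pc; exact: ler01.
have Phi' : {in `]0, 1[%R, Phi^`() =1 h}.
  move=> t; rewrite in_itv /= => /andP[t0 _].
  rewrite derive1E (@derive_val _ _ _ _ _ _ _ (PD t (ltW t0))) /h.
  by rewrite mulrCA -expr2 mulrC.
have HI := @continuous_FTC2 R h Phi 0 1 ltr01 (continuous_subspaceT hc) dPhi Phi'.
rewrite /Rintegral HI -EFinB /= /Phi /G mul1r mul0r mulrBr.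
by [].
Qed.

Let dotp0 (u : 'rV[R]_n.+1) : dotp u 0 = 0.
Proof. by rewrite /dotp big1 // => i _; rewrite [X in _ * X]mxE mulr0. Qed.

Let integrand_ge0 (v : 'rV[R]_n.+1) (t : R) : 0 <= t ->
  0 <= dotp (grad f (xs + t *: v)) v / t.
Proof.
move=> t0; have [->|v0] := eqVneq v 0; first by rewrite dotp0 mul0r.
have [->|tn0] := eqVneq t 0; first by rewrite invr0 mulr0.
have tp : 0 < t by rewrite lt_neqAle eq_sym tn0 t0.
have neq : xs + t *: v != xs.
  apply/negP => /eqP E.
  have : t *: v = 0.
    have -> : t *: v = (xs + t *: v) - xs by rewrite addrAC subrr add0r.
    by rewrite E subrr.
  by move/eqP; rewrite scaler_eq0 (negbTE tn0) (negbTE v0).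
have := hpc _ _ neq (hmin _).
rewrite (_ : xs - (xs + t *: v) = - (t *: v)); last by rewrite opprD addrA subrr add0r.
rewrite dotpNr dotpZr oppr_lt0 pmulr_rgt0 // => Hd.
by rewrite divr_ge0 // ltW.
Qed.

Let G_ge0 (r : R) : 0 <= r -> 0 <= G r.
Proof.
move=> r0.
have <- : enorm (r *: e) = r by rewrite enormZ /e enorm_basis mulr1 ger0_norm.
rewrite -int_G; apply: Rintegral_ge0 => t; rewrite /= in_itv /= => /andP[t0 _].
exact: integrand_ge0.
Qed.

Let G_cont (r : R) : 0 <= r -> {for r, continuous G}.
Proof.
move=> r0; apply: differentiable_continuous; apply/derivable1_diffP.
have r1 : -1 < r by lra.
exact: (@ex_derive _ _ _ _ _ _ _ (G_der r r1)).
Qed.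

Let G_conv (a b l : R) (l0 : 0 <= l) (l1 : l <= 1) : 0 <= a -> a <= b -> b <= M ->
  G (l * a + (1 - l) * b) <= l * G a + (1 - l) * G b.
Proof.
move=> a0 ab bM.
have := @second_derivative_convex R G a b _ _ _ _ _ (Itv01 l0 l1) ab.
rewrite !convRE /=; apply.
- move=> x /andP[ax xb].
  have x0 : 0 < x by lra.
  rewrite (@near_eq_derive _ _ _ ('D_1 G) H x 1 (DG_near x x0)).
  rewrite (@derive_val _ _ _ _ _ _ _ (H_der x x0)) /w (gt_eqF x0) q_psi // addrC.
  by apply: hM; apply/andP; split => //; lra.
- by apply: cvg_at_left_filter; apply: G_cont; lra.
- by apply: cvg_at_right_filter; apply: G_cont.
- move=> x; rewrite in_itv /= => /andP[ax _].
  have x1 : -1 < x by lra.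
  exact: (@ex_derive _ _ _ _ _ _ _ (G_der x x1)).
- move=> x; rewrite in_itv /= => /andP[ax _].
  have x0 : 0 < x by lra.
  apply: (@near_eq_derivable _ _ _ H ('D_1 G) x 1 _ (@ex_derive _ _ _ _ _ _ _ (H_der x x0))).
  near=> s; apply/esym; near: s; exact: DG_near.
Unshelve. all: by end_near. Qed.

Let G_convl (a b l : R) : 0 <= a <= M -> 0 <= b <= M -> 0 <= l <= 1 ->
  G (l * a + (1 - l) * b) <= l * G a + (1 - l) * G b.
Proof.
wlog ab : a b l / a <= b.
  move=> Hw ha hb hl; case: (leP a b) => [ab|/ltW ba]; first exact: Hw.
  have hl' : 0 <= 1 - l <= 1 by apply/andP; split; lra.
  have := Hw b a (1 - l) ba hb ha hl'.
  have E : 1 - (1 - l) = l by ring.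
  by rewrite E => Hc; rewrite addrC [X in _ <= X]addrC.
move=> /andP[a0 aM] /andP[b0 bM] /andP[l0 l1].
exact: G_conv.
Qed.

Let G_mono (a b : R) : 0 <= a -> a <= b -> b <= M -> G a <= G b.
Proof.
move=> a0 ab bM.
have [b0|bp] := eqVneq b 0.
  by have -> : a = b by rewrite b0 in ab *; apply/eqP; rewrite eq_le ab a0.
have b0 : 0 < b by rewrite lt_neqAle eq_sym bp /=; exact: le_trans ab.
have hl : 0 <= a / b <= 1.
  by apply/andP; split; [rewrite divr_ge0 // ltW|rewrite ler_pdivrMr // mul1r].
have G0 : G 0 = 0 by rewrite /G mul0r.
have hb : 0 <= b <= M by apply/andP; split => //; exact: ltW.
have h0 : (0:R) <= 0 <= M by apply/andP; split => //; exact: le_trans a0 (le_trans ab bM).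
have := G_convl b 0 (a / b) hb h0 hl.
rewrite mulr0 addr0 divfK ?gt_eqF // G0 mulr0 addr0 => Hc.
apply: (le_trans Hc); apply: ler_piMl; first exact: G_ge0 (ltW b0).
by case/andP: hl.
Qed.

Lemma main_conv : convex_on [set x | enorm (x - xs) <= M] (gfun f xs).
Proof.
move=> x y /= hx hy l /andP[l0 l1].
have gE z : gfun f xs z = f xs + G (enorm (z - xs)) by rewrite /gfun int_G.
rewrite !gE.
set a := enorm (x - xs); set b := enorm (y - xs).
have a0 : 0 <= a := enorm_ge0 _ _ _.
have b0 : 0 <= b := enorm_ge0 _ _ _.
have hz : enorm (l *: x + (1 - l) *: y - xs) <= l * a + (1 - l) * b.
  have -> : l *: x + (1 - l) *: y - xs = l *: (x - xs) + (1 - l) *: (y - xs).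
    by apply/rowP => i; rewrite !mxE; ring.
  apply: (le_trans (enormD _ _ _ _)).
  by rewrite !enormZ !ger0_norm // subr_ge0.
have hc : 0 <= l * a + (1 - l) * b by rewrite addr_ge0 // mulr_ge0 // subr_ge0.
have hcM : l * a + (1 - l) * b <= M.
  apply: (@le_trans _ _ (l * M + (1 - l) * M)).
    by apply: lerD; apply: ler_wpM2l => //; rewrite subr_ge0.
  by rewrite -mulrDl addrC subrK mul1r.
have H1 := G_mono _ _ (enorm_ge0 _ _ _) hz hcM.
have H2 : G (l * a + (1 - l) * b) <= l * G a + (1 - l) * G b.
  by apply: G_convl; apply/andP; split.
have E : l * (f xs + G a) + (1 - l) * (f xs + G b) = f xs + (l * G a + (1 - l) * G b)
  by ring.
by rewrite E lerD2l; exact: le_trans H1 H2.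
Qed.

End Main.

Theorem corollary4 (R : realType) (d : nat) (f : 'rV[R]_d -> R)
    (xs : 'rV[R]_d) (psi : R -> R) (M : R) :
  twice_differentiable f ->
  strictly_pseudoconvex f ->
  (forall x, f xs <= f x) ->
  (forall r, 0 < r -> derivable psi r 1 /\ derivable (derive1 psi) r 1) ->
  (forall x, f x = psi (enorm (x - xs))) ->
  (forall r, 0 < r <= M -> 0 <= derive1 (derive1 psi) r + derive1 psi r / r) ->
  convex_on [set x | enorm (x - xs) <= M] (gfun f xs).
Proof.
case: d f xs => [|n] f xs htd hpc hmin hpsi hf hM; last first.
  exact: (main_conv _ _ _ _ _ _ htd hpc hmin hpsi hf hM).
move=> x y _ _ l _.
have E : forall z : 'rV[R]_0, z = 0 by move=> z; apply/rowP => -[].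
rewrite (E (l *: x + (1 - l) *: y)) (E x) (E y).
by rewrite -mulrDl addrC subrK mul1r.
Qed.
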